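(* Let $(a:b:c:d)\in\mathbb{P}^3$ with $a+b=0$, and suppose that $X_{(a:b:c:d)}\subset(\mathbb{P}^1)^4$ has either exactly two singular points or a curve of singular points. Then there exists $(c_0:c_1:c_2:c_3)\in\mathbb{P}^3$ with $c_0^2\neq c_2^2$ and $D_{12}D_{13}D_{14}\neq0$ (i.e. the four lines $L_1,L_2,L_3,L_4$ are pairwise disjoint) such that $(a:b:c:d)=(x^2-y^2:t^2-z^2:z^2+t^2:x^2+y^2)$, where $x=2(c_0c_3-c_1c_2)$, $y=c_0^2-c_1^2-c_2^2+c_3^2$, $z=2(c_0c_1-c_2c_3)$, $t=c_0^2+c_1^2-c_2^2-c_3^2$.
   Context: $(\mathbb{P}^1)^4$ has coordinates $((x_i:y_i))_{i=1}^4$ (here $x_i,y_i$ are the coordinates of $\mathbb{P}^1$, distinct from the auxiliary quantities $x,y,z,t$ in the claim); $X_{(a:b:c:d)}=\{G_{a,b,c,d}=0\}$ with $G_{a,b,c,d}=\tfrac{a+d}{2}(x_1x_2x_3x_4+y_1y_2y_3y_4)+\tfrac{a-d}{2}(x_1x_2y_3y_4+y_1y_2x_3x_4)+\tfrac{b+c}{2}(x_1y_2x_3y_4+y_1x_2y_3x_4)+\tfrac{b-c}{2}(x_1y_2y_3x_4+y_1x_2x_3y_4)$. For $(c_0:c_1:c_2:c_3)\in\mathbb{P}^3$ with $c_0^2\ne c_2^2$, $L_1\subset\mathbb{P}^3_{z_0,\dots,z_3}$ is the line through $(c_0:c_1:c_2:c_3)$ and $(c_2:c_3:c_0:c_1)$,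 $L_2=\tau_1(L_1)$, $L_3=\tau_2(L_2)$, $L_4=\tau_2(L_1)$ with $\tau_1(z_0:z_1:z_2:z_3)=(z_1:z_0:z_3:z_2)$, $\tau_2(z_0:z_1:z_2:z_3)=(z_0:-z_1:z_2:-z_3)$. Set $D_{12}=((c_0+c_1)^2-(c_2+c_3)^2)((c_0-c_1)^2-(c_2-c_3)^2)$, $D_{13}=((c_0-c_2)^2+(c_1-c_3)^2)((c_0+c_2)^2+(c_1+c_3)^2)$, $D_{14}=(c_0^2-c_2^2)(c_1^2-c_3^2)$; the lines $L_1,\dots,L_4$ are pairwise disjoint iff $D_{12}D_{13}D_{14}\neq0$. *)

(* Defs.v *)
From HB Require Import structures.
From mathcomp Require Import all_boot all_order all_algebra.
From mathcomp Require Export complex reals.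
Set Implicit Arguments. Unset Strict Implicit. Unset Printing Implicit Defensive.
Import GRing.Theory Num.Theory.
Local Open Scope ring_scope.

(* A point of (P^1)^4 is represented by coordinates x, y : nat -> F, the i-th
   factor (i = 1..4) being (x i : y i). *)

Definition Gform (K : comNzRingType) (A B Cc D : K) (x y : nat -> K) : K :=
  A * (x 1%N * x 2%N * x 3%N * x 4%N + y 1%N * y 2%N * y 3%N * y 4%N)
+ B * (x 1%N * x 2%N * y 3%N * y 4%N + y 1%N * y 2%N * x 3%N * x 4%N)
+ Cc * (x 1%N * y 2%N * x 3%N * y 4%N + y 1%N * x 2%N * y 3%N * x 4%N)
+ D * (x 1%N * y 2%N * y 3%N * x 4%N + y 1%N * x 2%N * x 3%N * y 4%N).

Definition G (F : fieldType) (a b c d : F) (x y : nat -> F) : F :=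
  Gform ((a + d) / 2) ((a - d) / 2) ((b + c) / 2) ((b - c) / 2) x y.

Definition G_in_x (F : fieldType) (a b c d : F) (x y : nat -> F) (i : nat)
  : {poly F} :=
  Gform ((a + d) / 2)%:P ((a - d) / 2)%:P ((b + c) / 2)%:P ((b - c) / 2)%:P
    (fun j => if j == i then 'X else (x j)%:P) (fun j => (y j)%:P).
Definition G_in_y (F : fieldType) (a b c d : F) (x y : nat -> F) (i : nat)
  : {poly F} :=
  Gform ((a + d) / 2)%:P ((a - d) / 2)%:P ((b + c) / 2)%:P ((b - c) / 2)%:P
    (fun j => (x j)%:P) (fun j => if j == i then 'X else (y j)%:P).

Definition dGdx (F : fieldType) (a b c d : F) (x y : nat -> F) (i : nat) : F :=
  (G_in_x a b c d x y i)^`().[x i].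
Definition dGdy (F : fieldType) (a b c d : F) (x y : nat -> F) (i : nat) : F :=
  (G_in_y a b c d x y i)^`().[y i].

Definition is_pt (F : fieldType) (x y : nat -> F) : Prop :=
  forall i, (1 <= i <= 4)%N -> (x i != 0) || (y i != 0).

Definition same_pt (F : fieldType) (x y x' y' : nat -> F) : Prop :=
  forall i, (1 <= i <= 4)%N -> x i * y' i = x' i * y i.

Definition singular_pt (F : fieldType) (a b c d : F) (x y : nat -> F) : Prop :=
  [/\ is_pt x y, G a b c d x y = 0 &
      forall i, (1 <= i <= 4)%N -> dGdx a b c d x y i = 0 /\ dGdy a b c d x y i = 0].

Definition exactly_two_singular (F : fieldType) (a b c d : F) : Prop :=
  exists x1 y1 x2 y2 : nat -> F,
    [/\ singular_pt a b c d x1 y1, singular_pt a b c d x2 y2,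
        ~ same_pt x1 y1 x2 y2 &
        forall x y, singular_pt a b c d x y ->
          same_pt x y x1 y1 \/ same_pt x y x2 y2].

Definition infinitely_many_singular (F : fieldType) (a b c d : F) : Prop :=
  forall n : nat, exists s : nat -> (nat -> F) * (nat -> F),
    (forall k, (k < n)%N -> singular_pt a b c d (s k).1 (s k).2) /\
    (forall k l, (k < n)%N -> (l < n)%N -> k <> l ->
        ~ same_pt (s k).1 (s k).2 (s l).1 (s l).2).

(* The singular locus has dimension <= 1: for each pair of factors i < j, its
   (closed) image under the projection (P^1)^4 -> (P^1)^2 onto the factors
   i, j is not all of (P^1)^2, i.e. misses some point ((u:v),(u':v')). *)
Definition singular_dim_le1 (F : fieldType) (a b c d : F) : Prop :=
  forall i j, (1 <= i)%N -> (i < j)%N -> (j <= 4)%N ->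
    exists u v u' v' : F,
      [/\ (u != 0) || (v != 0), (u' != 0) || (v' != 0) &
          forall x y, singular_pt a b c d x y ->
            ~ (x i * v = u * y i /\ x j * v' = u' * y j)].

Definition curve_of_singular (F : fieldType) (a b c d : F) : Prop :=
  infinitely_many_singular a b c d /\ singular_dim_le1 a b c d.

Definition D12 (F : fieldType) (c0 c1 c2 c3 : F) : F :=
  ((c0 + c1) ^+ 2 - (c2 + c3) ^+ 2) * ((c0 - c1) ^+ 2 - (c2 - c3) ^+ 2).
Definition D13 (F : fieldType) (c0 c1 c2 c3 : F) : F :=
  ((c0 - c2) ^+ 2 + (c1 - c3) ^+ 2) * ((c0 + c2) ^+ 2 + (c1 + c3) ^+ 2).
Definition D14 (F : fieldType) (c0 c1 c2 c3 : F) : F :=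
  (c0 ^+ 2 - c2 ^+ 2) * (c1 ^+ 2 - c3 ^+ 2).

(* Main.v *)
Require Import Defs.
From mathcomp Require Import all_boot all_order all_algebra.
From mathcomp Require Import complex reals ring.
Import GRing.Theory Num.Theory.
Local Open Scope ring_scope.

Section Derivs.
Variables (F : numFieldType) (a b c d : F) (x y : nat -> F).
Local Notation x1 := (x 1%N). Local Notation x2 := (x 2%N).
Local Notation x3 := (x 3%N). Local Notation x4 := (x 4%N).
Local Notation y1 := (y 1%N). Local Notation y2 := (y 2%N).
Local Notation y3 := (y 3%N). Local Notation y4 := (y 4%N).

Ltac dtac := rewrite /dGdx /dGdy /G_in_x /G_in_y /Gform /= !derivE /= !hornerE /=; by field.

Lemma dGx1 : 2 * dGdx a b c d x y 1 = (a + d) * (x2 * x3 * x4) + (a - d) * (x2 * y3 * y4)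
   + (b + c) * (y2 * x3 * y4) + (b - c) * (y2 * y3 * x4).
Proof. dtac. Qed.
Lemma dGy1 : 2 * dGdy a b c d x y 1 = (a + d) * (y2 * y3 * y4) + (a - d) * (y2 * x3 * x4)
   + (b + c) * (x2 * y3 * x4) + (b - c) * (x2 * x3 * y4).
Proof. dtac. Qed.
Lemma dGx2 : 2 * dGdx a b c d x y 2 = (a + d) * (x1 * x3 * x4) + (a - d) * (x1 * y3 * y4)
   + (b + c) * (y1 * y3 * x4) + (b - c) * (y1 * x3 * y4).
Proof. dtac. Qed.
Lemma dGy2 : 2 * dGdy a b c d x y 2 = (a + d) * (y1 * y3 * y4) + (a - d) * (y1 * x3 * x4)
   + (b + c) * (x1 * x3 * y4) + (b - c) * (x1 * y3 * x4).
Proof. dtac. Qed.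
Lemma dGx3 : 2 * dGdx a b c d x y 3 = (a + d) * (x1 * x2 * x4) + (a - d) * (y1 * y2 * x4)
   + (b + c) * (x1 * y2 * y4) + (b - c) * (y1 * x2 * y4).
Proof. dtac. Qed.
Lemma dGy3 : 2 * dGdy a b c d x y 3 = (a + d) * (y1 * y2 * y4) + (a - d) * (x1 * x2 * y4)
   + (b + c) * (y1 * x2 * x4) + (b - c) * (x1 * y2 * x4).
Proof. dtac. Qed.
Lemma dGx4 : 2 * dGdx a b c d x y 4 = (a + d) * (x1 * x2 * x3) + (a - d) * (y1 * y2 * x3)
   + (b + c) * (y1 * x2 * y3) + (b - c) * (x1 * y2 * y3).
Proof. dtac. Qed.
Lemma dGy4 : 2 * dGdy a b c d x y 4 = (a + d) * (y1 * y2 * y3) + (a - d) * (x1 * x2 * y3)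
   + (b + c) * (x1 * y2 * x3) + (b - c) * (y1 * x2 * x3).
Proof. dtac. Qed.
Lemma G2 : 2 * G a b c d x y = (a + d) * (x1 * x2 * x3 * x4 + y1 * y2 * y3 * y4)
  + (a - d) * (x1 * x2 * y3 * y4 + y1 * y2 * x3 * x4)
  + (b + c) * (x1 * y2 * x3 * y4 + y1 * x2 * y3 * x4)
  + (b - c) * (x1 * y2 * y3 * x4 + y1 * x2 * x3 * y4).
Proof. rewrite /G /Gform; by field. Qed.
End Derivs.


Lemma two_mul_eq0 (F : numFieldType) (u : F) : 2 * u = 0 -> u = 0.
Proof. by move/eqP; rewrite mulf_eq0 pnatr_eq0 /= => /eqP. Qed.

Lemma by1 {F : fieldType} {u v den k p : F} :
  den != 0 -> p = 0 -> (u - v) * den = k * p -> u = v.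
Proof.
move=> nz -> ; rewrite mulr0 => /eqP; rewrite mulf_eq0 (negbTE nz) orbF subr_eq0.
by move/eqP.
Qed.

Lemma by2 {F : fieldType} {u v den k1 p1 k2 p2 : F} :
  den != 0 -> p1 = 0 -> p2 = 0 -> (u - v) * den = k1 * p1 + k2 * p2 -> u = v.
Proof. move=> nz h1 h2; rewrite h1 h2 !mulr0 addr0 => H.
apply: (by1 (k := 0) (p := 0) nz (erefl _)); by rewrite H mulr0. Qed.

Lemma nu_ex (F : fieldType) (X1 Y1 X2 Y2 e f g h : F) :
  (X1 != 0) || (Y1 != 0) -> (X2 != 0) || (Y2 != 0) ->
  e * X2 + f * Y2 = 0 -> h * X2 + g * Y2 = 0 ->
  e * X1 + h * Y1 = 0 -> f * X1 + g * Y1 = 0 ->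
  exists nu, [/\ e = nu * (Y1 * Y2), f = - nu * (Y1 * X2), g = nu * (X1 * X2)
     & h = - nu * (X1 * Y2)].
Proof.
move=> p1 p2 E1 E2 E3 E4.
case/orP: p1 => n1; case/orP: p2 => n2.
- exists (g / (X1 * X2)); split.
  + apply: (by2 (den := X1 * X2) (k1 := X2) (k2 := - Y1) _ E3 E2); last by field; rewrite ?n1 ?n2.
    by rewrite mulf_neq0.
  + apply: (by1 (den := X1) (k := 1) n1 E4); by field; rewrite ?n1 ?n2.
  + by field; rewrite ?n1 ?n2.
  + apply: (by1 (den := X2) (k := 1) n2 E2); by field; rewrite ?n1 ?n2.
- exists (- h / (X1 * Y2)); split.
  + apply: (by1 (den := X1) (k := 1) n1 E3); by field; rewrite ?n1 ?n2.
  + apply: (by2 (den := X1 * Y2) (k1 := Y2) (k2 := - Y1) _ E4 E2); last by field; rewrite ?n1 ?n2.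
    by rewrite mulf_neq0.
  + apply: (by1 (den := Y2) (k := 1) n2 E2); by field; rewrite ?n1 ?n2.
  + by field; rewrite ?n1 ?n2.
- exists (- f / (Y1 * X2)); split.
  + apply: (by1 (den := X2) (k := 1) n2 E1); by field; rewrite ?n1 ?n2.
  + by field; rewrite ?n1 ?n2.
  + apply: (by1 (den := Y1) (k := 1) n1 E4); by field; rewrite ?n1 ?n2.
  + apply: (by2 (den := Y1 * X2) (k1 := Y1) (k2 := - Y2) _ E2 E4); last by field; rewrite ?n1 ?n2.
    by rewrite mulf_neq0.
- exists (e / (Y1 * Y2)); split.
  + by field; rewrite ?n1 ?n2.
  + apply: (by1 (den := Y2) (k := 1) n2 E1); by field; rewrite ?n1 ?n2.
  + apply: (by2 (den := Y1 * Y2) (k1 := - X2) (k2 := Y1) _ E3 E2); last by field; rewrite ?n1 ?n2.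
    by rewrite mulf_neq0.
  + apply: (by1 (den := Y1) (k := 1) n1 E3); by field; rewrite ?n1 ?n2.
Qed.


Lemma lin0 {F : comRingType} {u k1 p1 k2 p2 : F} :
  p1 = 0 -> p2 = 0 -> u = k1 * p1 + k2 * p2 -> u = 0.
Proof. by move=> -> -> ->; rewrite !mulr0 addr0. Qed.

Lemma comb2 {F : comRingType} {X Y u1 v1 u2 v2 k1 k2 : F} :
  u1 = v1 -> u2 = v2 -> X - Y = k1 * (u1 - v1) + k2 * (u2 - v2) -> X = Y.
Proof.
move=> -> ->; rewrite !subrr !mulr0 addr0 => /eqP; rewrite subr_eq0; by move/eqP.
Qed.

Lemma neq_opp {F : numFieldType} {u : F} : u != 0 -> - u - u != 0.
Proof.
move=> nu; rewrite -opprD oppr_eq0 -mulr2n mulrn_eq0 /=; exact: nu.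
Qed.

Lemma sq_S {F : numFieldType} {X1 Y1 X2 Y2 : F} :
  (X1 != 0) || (Y1 != 0) -> (X2 != 0) || (Y2 != 0) ->
  X1 * X2 + Y1 * Y2 = 0 -> X1 * Y2 + Y1 * X2 = 0 ->
  X1 ^+ 2 = Y1 ^+ 2 /\ X2 ^+ 2 = Y2 ^+ 2.
Proof.
move=> p1 p2 hS hS'.
have h1 : (X1 + Y1) * (X2 + Y2) = 0.
  by apply: (lin0 (k1 := 1) (k2 := 1) hS hS'); ring.
have h2 : (X1 - Y1) * (X2 - Y2) = 0.
  by apply: (lin0 (k1 := 1) (k2 := -1) hS hS'); ring.
move/eqP: h1; rewrite mulf_eq0 => /orP[] /eqP h.
- have eX : X1 = - Y1 by apply/eqP; rewrite -addr_eq0 h.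
  rewrite eX oppr_eq0 orbb in p1.
  move/eqP: h2; rewrite eX mulf_eq0 (negbTE (neq_opp p1)) /= subr_eq0 => /eqP e2.
  by rewrite ?eX sqrrN e2.
- have eX : X2 = - Y2 by apply/eqP; rewrite -addr_eq0 h.
  rewrite eX oppr_eq0 orbb in p2.
  move/eqP: h2; rewrite eX mulf_eq0 (negbTE (neq_opp p2)) orbF subr_eq0 => /eqP e2.
  by rewrite ?eX sqrrN e2.
Qed.

Lemma sq_P {F : numFieldType} {X1 Y1 X2 Y2 : F} :
  (X1 != 0) || (Y1 != 0) -> (X2 != 0) || (Y2 != 0) ->
  X1 * X2 - Y1 * Y2 = 0 -> X1 * Y2 - Y1 * X2 = 0 ->
  X1 ^+ 2 = Y1 ^+ 2 /\ X2 ^+ 2 = Y2 ^+ 2.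
Proof.
move=> p1 p2 hP hP'.
have p2' : (X2 != 0) || (- Y2 != 0) by rewrite oppr_eq0.
have [] := @sq_S _ X1 Y1 X2 (- Y2) p1 p2'.
- by rewrite -hP; ring.
- by apply: (lin0 (k1 := -1) (k2 := 0) hP' hP'); ring.
by rewrite sqrrN.
Qed.


Lemma core (F : numFieldType) (a c d X1 Y1 X2 Y2 X3 Y3 X4 Y4 : F) :
  (c ^+ 2 = d ^+ 2 /\ c ^+ 2 != a ^+ 2) \/ (a = 0 /\ c != 0 /\ d != 0) ->
  (X1 != 0) || (Y1 != 0) -> (X2 != 0) || (Y2 != 0) ->
  (X3 != 0) || (Y3 != 0) -> (X4 != 0) || (Y4 != 0) ->
  (a + d) * (X2 * X3 * X4) + (a - d) * (X2 * Y3 * Y4)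
   + (- a + c) * (Y2 * X3 * Y4) + (- a - c) * (Y2 * Y3 * X4) = 0 ->
  (a + d) * (Y2 * Y3 * Y4) + (a - d) * (Y2 * X3 * X4)
   + (- a + c) * (X2 * Y3 * X4) + (- a - c) * (X2 * X3 * Y4) = 0 ->
  (a + d) * (X1 * X3 * X4) + (a - d) * (X1 * Y3 * Y4)
   + (- a + c) * (Y1 * Y3 * X4) + (- a - c) * (Y1 * X3 * Y4) = 0 ->
  (a + d) * (Y1 * Y3 * Y4) + (a - d) * (Y1 * X3 * X4)
   + (- a + c) * (X1 * X3 * Y4) + (- a - c) * (X1 * Y3 * X4) = 0 ->
  (a + d) * (X1 * X2 * X4) + (a - d) * (Y1 * Y2 * X4)
   + (- a + c) * (X1 * Y2 * Y4) + (- a - c) * (Y1 * X2 * Y4) = 0 ->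
  (a + d) * (Y1 * Y2 * Y4) + (a - d) * (X1 * X2 * Y4)
   + (- a + c) * (Y1 * X2 * X4) + (- a - c) * (X1 * Y2 * X4) = 0 ->
  (a + d) * (X1 * X2 * X3) + (a - d) * (Y1 * Y2 * X3)
   + (- a + c) * (Y1 * X2 * Y3) + (- a - c) * (X1 * Y2 * Y3) = 0 ->
  (a + d) * (Y1 * Y2 * Y3) + (a - d) * (X1 * X2 * Y3)
   + (- a + c) * (X1 * Y2 * X3) + (- a - c) * (Y1 * X2 * X3) = 0 ->
  [/\ X1 ^+ 2 = Y1 ^+ 2, X2 ^+ 2 = Y2 ^+ 2, X3 ^+ 2 = Y3 ^+ 2 & X4 ^+ 2 = Y4 ^+ 2].
Proof.
move=> H p1 p2 p3 p4 h1 h2 h3 h4 h5 h6 h7 h8.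
set e := (a + d) * (X3 * X4) + (a - d) * (Y3 * Y4).
set f := (- a + c) * (X3 * Y4) + (- a - c) * (Y3 * X4).
set g := (a + d) * (Y3 * Y4) + (a - d) * (X3 * X4).
set h := (- a + c) * (Y3 * X4) + (- a - c) * (X3 * Y4).
have E1 : e * X2 + f * Y2 = 0 by apply: (eq_trans _ h1); rewrite /e /f; ring.
have E2 : h * X2 + g * Y2 = 0 by apply: (eq_trans _ h2); rewrite /h /g; ring.
have E3 : e * X1 + h * Y1 = 0 by apply: (eq_trans _ h3); rewrite /e /h; ring.
have E4 : f * X1 + g * Y1 = 0 by apply: (eq_trans _ h4); rewrite /f /g; ring.
have [nu [He Hf Hg Hh]] := @nu_ex _ X1 Y1 X2 Y2 e f g h p1 p2 E1 E2 E3 E4.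
set e' := (a + d) * (X1 * X2) + (a - d) * (Y1 * Y2).
set f' := (- a + c) * (X1 * Y2) + (- a - c) * (Y1 * X2).
set g' := (a + d) * (Y1 * Y2) + (a - d) * (X1 * X2).
set h' := (- a + c) * (Y1 * X2) + (- a - c) * (X1 * Y2).
have E5 : e' * X4 + f' * Y4 = 0 by apply: (eq_trans _ h5); rewrite /e' /f'; ring.
have E6 : h' * X4 + g' * Y4 = 0 by apply: (eq_trans _ h6); rewrite /h' /g'; ring.
have E7 : e' * X3 + h' * Y3 = 0 by apply: (eq_trans _ h7); rewrite /e' /h'; ring.
have E8 : f' * X3 + g' * Y3 = 0 by apply: (eq_trans _ h8); rewrite /f' /g'; ring.
have [nu' [He' Hf' Hg' Hh']] := @nu_ex _ X3 Y3 X4 Y4 e' f' g' h' p3 p4 E5 E6 E7 E8.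
set S := X1 * X2 + Y1 * Y2. set S' := X1 * Y2 + Y1 * X2.
set P := X1 * X2 - Y1 * Y2. set P' := X1 * Y2 - Y1 * X2.
set T := X3 * X4 + Y3 * Y4. set T' := X3 * Y4 + Y3 * X4.
set Q := X3 * X4 - Y3 * Y4. set Q' := X3 * Y4 - Y3 * X4.
have R1 : 2 * a * T = nu * S.
  by apply: (comb2 (k1 := 1) (k2 := 1) He Hg); rewrite /e /g /T /S; ring.
have R2 : 2 * d * Q = - (nu * P).
  by apply: (comb2 (k1 := 1) (k2 := -1) He Hg); rewrite /e /g /Q /P; ring.
have R3 : 2 * a * T' = nu * S'.
  by apply: (comb2 (k1 := -1) (k2 := -1) Hf Hh); rewrite /f /h /T' /S'; ring.
have R4 : 2 * c * Q' = nu * P'.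
  by apply: (comb2 (k1 := 1) (k2 := -1) Hf Hh); rewrite /f /h /Q' /P'; ring.
have R1' : 2 * a * S = nu' * T.
  by apply: (comb2 (k1 := 1) (k2 := 1) He' Hg'); rewrite /e' /g' /T /S; ring.
have R2' : 2 * d * P = - (nu' * Q).
  by apply: (comb2 (k1 := 1) (k2 := -1) He' Hg'); rewrite /e' /g' /Q /P; ring.
have R3' : 2 * a * S' = nu' * T'.
  by apply: (comb2 (k1 := -1) (k2 := -1) Hf' Hh'); rewrite /f' /h' /T' /S'; ring.
have R4' : 2 * c * P' = nu' * Q'.
  by apply: (comb2 (k1 := 1) (k2 := -1) Hf' Hh'); rewrite /f' /h' /Q' /P'; ring.
set t := nu * nu'.
have FS : (4 * a ^+ 2 - t) * S = 0.
  by apply: (comb2 (k1 := 2 * a) (k2 := nu') R1' R1); rewrite /t; ring.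
have FS' : (4 * a ^+ 2 - t) * S' = 0.
  by apply: (comb2 (k1 := 2 * a) (k2 := nu') R3' R3); rewrite /t; ring.
have FP' : (4 * c ^+ 2 - t) * P' = 0.
  by apply: (comb2 (k1 := 2 * c) (k2 := nu') R4' R4); rewrite /t; ring.
have FP : (4 * d ^+ 2 - t) * P = 0.
  by apply: (comb2 (k1 := 2 * d) (k2 := - nu') R2' R2); rewrite /t; ring.
have FT : (4 * a ^+ 2 - t) * T = 0.
  by apply: (comb2 (k1 := 2 * a) (k2 := nu) R1 R1'); rewrite /t; ring.
have FT' : (4 * a ^+ 2 - t) * T' = 0.
  by apply: (comb2 (k1 := 2 * a) (k2 := nu) R3 R3'); rewrite /t; ring.
have FQ' : (4 * c ^+ 2 - t) * Q' = 0.
  by apply: (comb2 (k1 := 2 * c) (k2 := nu) R4 R4'); rewrite /t; ring.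
have FQ : (4 * d ^+ 2 - t) * Q = 0.
  by apply: (comb2 (k1 := 2 * d) (k2 := - nu) R2 R2'); rewrite /t; ring.
have z0 : forall u v : F, u != 0 -> u * v = 0 -> v = 0.
  by move=> u v nu0 /eqP; rewrite mulf_eq0 (negbTE nu0) /= => /eqP.
have caseS : S = 0 /\ S' = 0 /\ T = 0 /\ T' = 0 ->
  [/\ X1 ^+ 2 = Y1 ^+ 2, X2 ^+ 2 = Y2 ^+ 2, X3 ^+ 2 = Y3 ^+ 2 & X4 ^+ 2 = Y4 ^+ 2].
  move=> [hS [hS' [hT hT']]].
  have [q1 q2] := sq_S p1 p2 hS hS'.
  have [q3 q4] := sq_S p3 p4 hT hT'.
  by split.
have caseP : P = 0 /\ P' = 0 /\ Q = 0 /\ Q' = 0 ->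
  [/\ X1 ^+ 2 = Y1 ^+ 2, X2 ^+ 2 = Y2 ^+ 2, X3 ^+ 2 = Y3 ^+ 2 & X4 ^+ 2 = Y4 ^+ 2].
  move=> [hP [hP' [hQ hQ']]].
  have [q1 q2] := sq_P p1 p2 hP hP'.
  have [q3 q4] := sq_P p3 p4 hQ hQ'.
  by split.
have n4 : (4 : F) != 0 by rewrite pnatr_eq0.
case: H => [[ecd nca] | [a0 [nc nd]]].
- have [ta | ta] := eqVneq t (4 * a ^+ 2).
  + have nc' : 4 * c ^+ 2 - t != 0.
      by rewrite ta -mulrBr mulf_neq0 // subr_eq0.
    have nd' : 4 * d ^+ 2 - t != 0 by rewrite -ecd.
    apply: caseP; split; first exact: z0 nd' FP.
    split; first exact: z0 nc' FP'.
    split; first exact: z0 nd' FQ.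
    exact: z0 nc' FQ'.
  + have na' : 4 * a ^+ 2 - t != 0 by rewrite subr_eq0 eq_sym.
    apply: caseS; split; first exact: z0 na' FS.
    split; first exact: z0 na' FS'.
    split; first exact: z0 na' FT.
    exact: z0 na' FT'.
- have [t0 | t0] := eqVneq t 0.
  + have nc' : 4 * c ^+ 2 - t != 0 by rewrite t0 subr0 mulf_neq0 // expf_neq0.
    have nd' : 4 * d ^+ 2 - t != 0 by rewrite t0 subr0 mulf_neq0 // expf_neq0.
    apply: caseP; split; first exact: z0 nd' FP.
    split; first exact: z0 nc' FP'.
    split; first exact: z0 nd' FQ.
    exact: z0 nc' FQ'.
  + have na' : 4 * a ^+ 2 - t != 0 by rewrite a0 expr0n /= mulr0 sub0r oppr_eq0.
    apply: caseS; split; first exact: z0 na' FS.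
    split; first exact: z0 na' FS'.
    split; first exact: z0 na' FT.
    exact: z0 na' FT'.
Qed.


Lemma sing_sq (F : numFieldType) (a c d : F) x y :
  (c ^+ 2 = d ^+ 2 /\ c ^+ 2 != a ^+ 2) \/ (a = 0 /\ c != 0 /\ d != 0) ->
  singular_pt a (- a) c d x y ->
  [/\ x 1%N ^+ 2 = y 1%N ^+ 2, x 2%N ^+ 2 = y 2%N ^+ 2, x 3%N ^+ 2 = y 3%N ^+ 2
    & x 4%N ^+ 2 = y 4%N ^+ 2].
Proof.
move=> H [pt _ D].
have [dx1 dy1] := D 1%N isT. have [dx2 dy2] := D 2%N isT.
have [dx3 dy3] := D 3%N isT. have [dx4 dy4] := D 4%N isT.
have h1 := @dGx1 _ a (- a) c d x y. have h2 := @dGy1 _ a (- a) c d x y.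
have h3 := @dGx2 _ a (- a) c d x y. have h4 := @dGy2 _ a (- a) c d x y.
have h5 := @dGx3 _ a (- a) c d x y. have h6 := @dGy3 _ a (- a) c d x y.
have h7 := @dGx4 _ a (- a) c d x y. have h8 := @dGy4 _ a (- a) c d x y.
rewrite dx1 mulr0 in h1. rewrite dy1 mulr0 in h2.
rewrite dx2 mulr0 in h3. rewrite dy2 mulr0 in h4.
rewrite dx3 mulr0 in h5. rewrite dy3 mulr0 in h6.
rewrite dx4 mulr0 in h7. rewrite dy4 mulr0 in h8.
exact: (@core _ a c d _ _ _ _ _ _ _ _ H (pt 1%N isT) (pt 2%N isT) (pt 3%N isT) (pt 4%N isT)
  (esym h1) (esym h2) (esym h3) (esym h4) (esym h5) (esym h6) (esym h7) (esym h8)).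
Qed.

Lemma negeq {F : numFieldType} (u : F) : (- u == u) = (u == 0).
Proof. by rewrite eq_sym -subr_eq0 opprK -mulr2n mulrn_eq0. Qed.

Lemma sq_same (F : numFieldType) (x y x' y' : F) :
  (x != 0) || (y != 0) -> x ^+ 2 = y ^+ 2 -> x' ^+ 2 = y' ^+ 2 ->
  (x == y) = (x' == y') -> x * y' = x' * y.
Proof.
move=> p e e' exy.
have ex : x = y \/ x = - y.
  by move/eqP: e; rewrite eqf_sqr => /orP[] /eqP; [left | right].
have ex' : x' = y' \/ x' = - y'.
  by move/eqP: e'; rewrite eqf_sqr => /orP[] /eqP; [left | right].
have ny : y != 0.
  by case: ex p => ->; rewrite ?oppr_eq0 orbb.
case: ex exy => ->; case: ex' => ->.
- by move=> _; rewrite mulrC.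
- rewrite eqxx negeq => /esym/eqP ->; by rewrite oppr0 !mulr0 mul0r.
- by rewrite eqxx negeq (negbTE ny).
- by move=> _; ring.
Qed.


Lemma not_inf (F : numFieldType) (a c d : F) :
  (c ^+ 2 = d ^+ 2 /\ c ^+ 2 != a ^+ 2) \/ (a = 0 /\ c != 0 /\ d != 0) ->
  ~ infinitely_many_singular a (- a) c d.
Proof.
move=> H Hinf.
have [s [Hs Hd]] := Hinf 17%N.
pose code (k : 'I_17) : bool * bool * bool * bool :=
  ((s k).1 1%N == (s k).2 1%N, (s k).1 2%N == (s k).2 2%N,
   (s k).1 3%N == (s k).2 3%N, (s k).1 4%N == (s k).2 4%N).
have inj : injective code.
  move=> k l e.
  apply/eqP; apply/negPn/negP => kl.
  have kl' : (k : nat) <> l by move=> E; move/negP: kl; apply; apply/eqP/val_inj.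
  apply: (Hd k l (ltn_ord k) (ltn_ord l) kl').
  have sk := Hs k (ltn_ord k). have sl := Hs l (ltn_ord l).
  have [q1 q2 q3 q4] := @sing_sq _ a c d _ _ H sk.
  have [r1 r2 r3 r4] := @sing_sq _ a c d _ _ H sl.
  have [pk _ _] := sk.
  case: e => e1 e2 e3 e4.
  move=> [|[|[|[|[|i]]]]] //= _.
  - exact: (@sq_same _ _ _ _ _ (pk 1%N isT) q1 r1 e1).
  - exact: (@sq_same _ _ _ _ _ (pk 2%N isT) q2 r2 e2).
  - exact: (@sq_same _ _ _ _ _ (pk 3%N isT) q3 r3 e3).
  - exact: (@sq_same _ _ _ _ _ (pk 4%N isT) q4 r4 e4).
have := leq_card code inj.
by rewrite card_ord !card_prod !card_bool.
Qed.


Definition mk {F : Type} (p1 p2 p3 p4 : F) : nat -> F :=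
  fun i => match i with 1%N => p1 | 2%N => p2 | 3%N => p3 | _ => p4 end.

Lemma sing_mk {F : numFieldType} (a b c d X1 X2 X3 X4 Y1 Y2 Y3 Y4 : F) :
  (X1 != 0) || (Y1 != 0) -> (X2 != 0) || (Y2 != 0) ->
  (X3 != 0) || (Y3 != 0) -> (X4 != 0) || (Y4 != 0) ->
  (a + d) * (X1 * X2 * X3 * X4 + Y1 * Y2 * Y3 * Y4)
  + (a - d) * (X1 * X2 * Y3 * Y4 + Y1 * Y2 * X3 * X4)
  + (b + c) * (X1 * Y2 * X3 * Y4 + Y1 * X2 * Y3 * X4)
  + (b - c) * (X1 * Y2 * Y3 * X4 + Y1 * X2 * X3 * Y4) = 0 ->
  (a + d) * (X2 * X3 * X4) + (a - d) * (X2 * Y3 * Y4)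
   + (b + c) * (Y2 * X3 * Y4) + (b - c) * (Y2 * Y3 * X4) = 0 ->
  (a + d) * (Y2 * Y3 * Y4) + (a - d) * (Y2 * X3 * X4)
   + (b + c) * (X2 * Y3 * X4) + (b - c) * (X2 * X3 * Y4) = 0 ->
  (a + d) * (X1 * X3 * X4) + (a - d) * (X1 * Y3 * Y4)
   + (b + c) * (Y1 * Y3 * X4) + (b - c) * (Y1 * X3 * Y4) = 0 ->
  (a + d) * (Y1 * Y3 * Y4) + (a - d) * (Y1 * X3 * X4)
   + (b + c) * (X1 * X3 * Y4) + (b - c) * (X1 * Y3 * X4) = 0 ->
  (a + d) * (X1 * X2 * X4) + (a - d) * (Y1 * Y2 * X4)
   + (b + c) * (X1 * Y2 * Y4) + (b - c) * (Y1 * X2 * Y4) = 0 ->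
  (a + d) * (Y1 * Y2 * Y4) + (a - d) * (X1 * X2 * Y4)
   + (b + c) * (Y1 * X2 * X4) + (b - c) * (X1 * Y2 * X4) = 0 ->
  (a + d) * (X1 * X2 * X3) + (a - d) * (Y1 * Y2 * X3)
   + (b + c) * (Y1 * X2 * Y3) + (b - c) * (X1 * Y2 * Y3) = 0 ->
  (a + d) * (Y1 * Y2 * Y3) + (a - d) * (X1 * X2 * Y3)
   + (b + c) * (X1 * Y2 * X3) + (b - c) * (Y1 * X2 * X3) = 0 ->
  singular_pt a b c d (mk X1 X2 X3 X4) (mk Y1 Y2 Y3 Y4).
Proof.
move=> p1 p2 p3 p4 hG h1 h2 h3 h4 h5 h6 h7 h8; split.
- by move=> [|[|[|[|[|i]]]]].
- by apply: two_mul_eq0; rewrite G2.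
- move=> [|[|[|[|[|i]]]]] //= _; split; apply: two_mul_eq0.
  + by rewrite dGx1. + by rewrite dGy1.
  + by rewrite dGx2. + by rewrite dGy2.
  + by rewrite dGx3. + by rewrite dGy3.
  + by rewrite dGx4. + by rewrite dGy4.
Qed.

Lemma same_trans {F : fieldType} {x y x' y' x2 y2 : nat -> F} :
  is_pt x' y' -> same_pt x y x' y' -> same_pt x2 y2 x' y' -> same_pt x y x2 y2.
Proof.
move=> p s1 s2 i hi.
have e1 : x i * y' i - x' i * y i = 0 by rewrite (s1 i hi) subrr.
have e2 : x2 i * y' i - x' i * y2 i = 0 by rewrite (s2 i hi) subrr.
case/orP: (p i hi) => n.
- apply: (by2 (den := x' i) (k1 := x2 i) (k2 := - x i) n e1 e2); ring.
- apply: (by2 (den := y' i) (k1 := y2 i) (k2 := - y i) n e1 e2); ring.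
Qed.

Lemma not_two3 {F : fieldType} {a b c d : F} {x1 y1 x2 y2 x3 y3 : nat -> F} :
  singular_pt a b c d x1 y1 -> singular_pt a b c d x2 y2 ->
  singular_pt a b c d x3 y3 ->
  ~ same_pt x1 y1 x2 y2 -> ~ same_pt x1 y1 x3 y3 -> ~ same_pt x2 y2 x3 y3 ->
  ~ exactly_two_singular a b c d.
Proof.
move=> s1 s2 s3 n12 n13 n23 [u1 [v1 [u2 [v2 [su1 su2 _ Hall]]]]].
have [pu1 _ _] := su1. have [pu2 _ _] := su2.
case: (Hall _ _ s1) => h1; case: (Hall _ _ s2) => h2; case: (Hall _ _ s3) => h3.
- exact: n12 (same_trans pu1 h1 h2).
- exact: n12 (same_trans pu1 h1 h2).
- exact: n13 (same_trans pu1 h1 h3).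
- exact: n23 (same_trans pu2 h2 h3).
- exact: n23 (same_trans pu1 h2 h3).
- exact: n13 (same_trans pu2 h1 h3).
- exact: n12 (same_trans pu2 h1 h2).
- exact: n12 (same_trans pu2 h1 h2).
Qed.

Lemma m1_neq1 {F : numFieldType} : (-1 : F) != 1.
Proof. by rewrite negeq oner_eq0. Qed.

Lemma diff_at {F : fieldType} (i : nat) (x y x' y' : nat -> F) :
  (1 <= i <= 4)%N -> x i * y' i != x' i * y i -> ~ same_pt x y x' y'.
Proof. by move=> hi ne s; move/eqP: ne; apply; apply: s. Qed.


Ltac difftac k := move=> HS; have := HS k isT; rewrite /= ?mul1r ?mulr1 => /eqP; rewrite ?(eq_sym 1 (-1)) (negbTE m1_neq1) //.

Ltac singtac := apply: sing_mk; try (by rewrite ?oner_eq0 ?oppr_eq0 ?orbT); ring.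

Lemma three_pts {F : numFieldType} (a c d : F) :
  (a = 0 \/ c = d \/ c = - d) -> ~ exactly_two_singular a (- a) c d.
Proof.
move=> H.
have s1 : singular_pt a (- a) c d (mk 1 1 1 1) (mk 1 1 1 1) by singtac.
have s2 : singular_pt a (- a) c d (mk 1 1 1 1) (mk (-1) (-1) (-1) (-1)) by singtac.
have n12 : ~ same_pt (mk (1 : F) 1 1 1) (mk 1 1 1 1) (mk 1 1 1 1) (mk (-1) (-1) (-1) (-1)).
  difftac 1%N.
case: H => [a0 | [ecd | ecd]].
- subst a.
  have s3 : singular_pt 0 (- 0) c d (mk 1 1 1 1) (mk 1 1 (-1) (-1)) by singtac.
  apply: (not_two3 s1 s2 s3) => //.
  + difftac 3%N.
  + difftac 1%N.
- subst c.
  have s3 : singular_pt a (- a) d d (mk 1 1 1 1) (mk (-1) 1 1 (-1)) by singtac.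
  apply: (not_two3 s1 s2 s3) => //.
  + difftac 1%N.
  + difftac 2%N.
- subst c.
  have s3 : singular_pt a (- a) (- d) d (mk 1 1 1 1) (mk (-1) 1 (-1) 1) by singtac.
  apply: (not_two3 s1 s2 s3) => //.
  + difftac 1%N.
  + difftac 2%N.
Qed.


Ltac singtac2 nz nz' := apply: sing_mk;
  try (by rewrite ?nz ?nz'); try (by rewrite orbC ?nz ?nz'); ring.

Lemma surf_a0 {F : numFieldType} (c d : F) :
  c = 0 \/ d = 0 -> ~ singular_dim_le1 0 (- 0) c d.
Proof.
move=> H Hd.
have [u [v [u' [v' [nz nz' Hn]]]]] := Hd 1%N 3%N isT isT isT.
case: H => e; subst.
- apply: (Hn (mk u v u' v') (mk v u v' u')); last by [].
  singtac2 nz nz'.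
- apply: (Hn (mk u u u' u') (mk v v v' v')); last by [].
  singtac2 nz nz'.
Qed.

Lemma surf_D4 {F : numFieldType} (a c d : F) :
  c ^+ 2 = a ^+ 2 -> d ^+ 2 = a ^+ 2 -> ~ singular_dim_le1 a (- a) c d.
Proof.
move=> /eqP; rewrite eqf_sqr => /orP[] /eqP ec /eqP; rewrite eqf_sqr => /orP[] /eqP ed Hd;
have [u [v [u' [v' [nz nz' Hn]]]]] := Hd 1%N 2%N isT isT isT; subst.
- apply: (Hn (mk u u' v' v) (mk v v' u' u)); last by [].
  singtac2 nz nz'.
- apply: (Hn (mk u u' u u') (mk v v' v v')); last by [].
  singtac2 nz nz'.
- apply: (Hn (mk u u' v v') (mk v v' u u')); last by [].
  singtac2 nz nz'.
- apply: (Hn (mk u u' u' u) (mk v v' v' v)); last by [].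
  singtac2 nz nz'.
Qed.


Lemma quad_root {C : numClosedFieldType} (A B K : C) :
  A != 0 -> exists x, A * x ^+ 2 + B * x + K = 0.
Proof.
move=> nA.
pose s := sqrtC (B ^+ 2 - 4 * A * K).
have hs : s ^+ 2 = B ^+ 2 - 4 * A * K by rewrite sqrtCK.
exists ((- B + s) / (2 * A)).
have -> : A * ((- B + s) / (2 * A)) ^+ 2 + B * ((- B + s) / (2 * A)) + K
   = (s ^+ 2 - (B ^+ 2 - 4 * A * K)) / (4 * A).
  by field.
by rewrite hs subrr mul0r.
Qed.

Lemma nat_neq0 {C : numFieldType} (k : nat) : (k.+1%:R : C) != 0.
Proof. by rewrite pnatr_eq0. Qed.

Lemma suff {C : numClosedFieldType} (a c d : C) :
  a != 0 -> c != d -> c != - d ->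
  exists c0 c1 c2 c3 : C,
    [/\ (c0 != 0) || (c1 != 0) || (c2 != 0) || (c3 != 0),
        c0 ^+ 2 != c2 ^+ 2,
        D12 c0 c1 c2 c3 * D13 c0 c1 c2 c3 * D14 c0 c1 c2 c3 != 0 &
        let x := 2 * (c0 * c3 - c1 * c2) in
        let y := c0 ^+ 2 - c1 ^+ 2 - c2 ^+ 2 + c3 ^+ 2 in
        let z := 2 * (c0 * c1 - c2 * c3) in
        let t := c0 ^+ 2 + c1 ^+ 2 - c2 ^+ 2 - c3 ^+ 2 in
        exists lambda : C, lambda != 0 /\
          [/\ a = lambda * (x ^+ 2 - y ^+ 2), - a = lambda * (t ^+ 2 - z ^+ 2),
              c = lambda * (z ^+ 2 + t ^+ 2) & d = lambda * (x ^+ 2 + y ^+ 2)]].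
Proof.
move=> na ncd ncd'.
have cd0 : c - d != 0 by rewrite subr_eq0.
have cd1 : c + d != 0 by rewrite addr_eq0.
have nA : (c - d) ^+ 2 / 32 != 0.
  by rewrite mulf_neq0 ?invr_eq0 ?expf_neq0 ?nat_neq0.
have [mu Hmu] := @quad_root _ _ (- ((c + d) / 2 - a)) 2 nA.
have nmu : mu != 0.
  apply/eqP => m0; move: Hmu; rewrite m0 expr0n /= !mulr0 !add0r => /eqP.
  by rewrite (negbTE (nat_neq0 1)).
pose m := mu * (c - d) / 8.
have nm : m != 0 by rewrite /m !mulf_neq0 ?invr_eq0 ?nat_neq0.
pose n := mu * ((c + d) / 2 + a) / 2.
have [rho Hrho] := @quad_root _ 1 (- n) (m ^+ 2) (@oner_neq0 C).
have nrho : rho != 0.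
  apply/eqP => r0; move: Hrho; rewrite r0 expr0n /= !mulr0 !add0r => /eqP.
  by rewrite expf_eq0 /= (negbTE nm).
pose r := sqrtC rho.
have hr : r ^+ 2 = rho by rewrite sqrtCK.
have nr : r != 0 by apply/eqP => r0; move: hr; rewrite r0 expr0n /= => /esym/eqP; rewrite (negbTE nrho).
pose s := m / r.
have K3 : r * s = m by rewrite /s; field.
have K1 : (1 - r ^+ 2) * (1 - s ^+ 2) = - (mu * a).
  rewrite /s expr_div_n hr.
  apply: (by2 (den := rho) (k1 := rho / 2) (k2 := -1) nrho Hmu Hrho).
  rewrite /m /n; by field.
have K2 : (1 + r ^+ 2) * (1 + s ^+ 2) = mu * (c + d) / 2.
  rewrite /s expr_div_n hr.
  apply: (by2 (den := rho) (k1 := rho / 2) (k2 := 1) nrho Hmu Hrho).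
  rewrite /m /n; by field.
exists ((r + s) / 2), 1, ((r - s) / 2), 0; split.
- by rewrite oner_neq0 /= orbT.
- rewrite -subr_eq0.
  have -> : ((r + s) / 2) ^+ 2 - ((r - s) / 2) ^+ 2 = r * s by field.
  by rewrite K3.
- have -> : D12 ((r + s) / 2) 1 ((r - s) / 2) 0 * D13 ((r + s) / 2) 1 ((r - s) / 2) 0
      * D14 ((r + s) / 2) 1 ((r - s) / 2) 0
      = ((1 - r ^+ 2) * (1 - s ^+ 2)) * ((1 + r ^+ 2) * (1 + s ^+ 2)) * (r * s).
    by rewrite /D12 /D13 /D14; field.
  by rewrite K1 K2 K3 !mulf_neq0 ?oppr_eq0 ?mulf_neq0 ?invr_eq0 ?nat_neq0.
- cbv zeta.
  exists mu^-1; split; first by rewrite invr_eq0.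
  split.
  + transitivity (mu^-1 * (mu * a)); first by rewrite mulKf.
    congr (_ * _).
    rewrite -[mu * a]opprK -K1; by field.
  + transitivity (mu^-1 * (mu * - a)); first by rewrite mulKf.
    congr (_ * _).
    rewrite mulrN -K1; by field.
  + transitivity (mu^-1 * (mu * c)); first by rewrite mulKf.
    congr (_ * _).
    have -> : mu * c = (1 + r ^+ 2) * (1 + s ^+ 2) + 4 * (r * s).
      by rewrite K2 K3 /m; field.
    by field.
  + transitivity (mu^-1 * (mu * d)); first by rewrite mulKf.
    congr (_ * _).
    have -> : mu * d = (1 + r ^+ 2) * (1 + s ^+ 2) - 4 * (r * s).
      by rewrite K2 K3 /m; field.
    by field.
Qed.


Theorem mainTheorem20 (R : realType) (a b c d : R[i]) :
  (a != 0) || (b != 0) || (c != 0) || (d != 0) ->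
  a + b = 0 ->
  exactly_two_singular a b c d \/ curve_of_singular a b c d ->
  exists c0 c1 c2 c3 : R[i],
    [/\ (c0 != 0) || (c1 != 0) || (c2 != 0) || (c3 != 0),
        c0 ^+ 2 != c2 ^+ 2,
        D12 c0 c1 c2 c3 * D13 c0 c1 c2 c3 * D14 c0 c1 c2 c3 != 0 &
        let x := 2 * (c0 * c3 - c1 * c2) in
        let y := c0 ^+ 2 - c1 ^+ 2 - c2 ^+ 2 + c3 ^+ 2 in
        let z := 2 * (c0 * c1 - c2 * c3) in
        let t := c0 ^+ 2 + c1 ^+ 2 - c2 ^+ 2 - c3 ^+ 2 in
        exists lambda : R[i], lambda != 0 /\
          [/\ a = lambda * (x ^+ 2 - y ^+ 2), b = lambda * (t ^+ 2 - z ^+ 2),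
              c = lambda * (z ^+ 2 + t ^+ 2) & d = lambda * (x ^+ 2 + y ^+ 2)]].
Proof.
move=> _ hab H.
have hb : b = - a by apply/eqP; rewrite -addr_eq0 addrC hab.
subst b.
case: (boolP ((a != 0) && (c != d) && (c != - d))) => [/andP[/andP[na ncd] ncd'] | hdeg].
  exact: suff na ncd ncd'.
exfalso.
rewrite !negb_and !negbK in hdeg.
case: H => [H2 | [Hinf Hdim]].
  apply: (three_pts a c d) H2.
  case/orP: hdeg => [/orP[] | ] /eqP e; by [left | right; left | right; right].
case: (a =P 0) => [a0 | /eqP na].
  subst a.
  case: (c =P 0) => [c0 | /eqP nc].
    by apply: (surf_a0 c d) Hdim; left.
  case: (d =P 0) => [d0 | /eqP nd].
    by apply: (surf_a0 c d) Hdim; right.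
  by apply: (@not_inf _ 0 c d) Hinf; right.
have ecd : c ^+ 2 = d ^+ 2.
  move: hdeg; rewrite (negbTE na) /= => /orP[] /eqP ->; by rewrite ?sqrrN.
case: (c ^+ 2 =P a ^+ 2) => [eca | /eqP nca].
  by apply: (surf_D4 a c d) Hdim => //; rewrite -ecd.
by apply: (@not_inf _ a c d) Hinf; left.
Qed.
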